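(* Let $0<m<L$, $\kappa=L/m$, $\delta\in(0,1)$, and suppose \[ \max(\alpha_-,0)<\alpha\le\frac{2}{(1+\delta)L+(1-\delta)m},\qquad \alpha_-:=\frac{1}{1-\delta}\left(\frac{2}{L+m}-\frac{\delta}{m}\right). \] Set $\rho_\star=1-\alpha m(1-\delta)$ and \[ \gamma_\star=\frac{\rho_\star\big(\kappa-1+(\kappa+1)(\delta-\rho_\star)\big)}{(\kappa-(1-\delta))\,\delta}. \] Then $0<\gamma_\star<\rho_\star^2$. *)

(* Defs.v *)
From Stdlib Require Import Reals.
Open Scope R_scope.

Definition alpha_minus (m L delta : R) : R :=
  (1 / (1 - delta)) * (2 / (L + m) - delta / m).

Definition rho_star (m alpha delta : R) : R := 1 - alpha * m * (1 - delta).

Definition gamma_star (m L alpha delta : R) : R :=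
  let kappa := L / m in
  let rho := rho_star m alpha delta in
  rho * (kappa - 1 + (kappa + 1) * (delta - rho)) / ((kappa - (1 - delta)) * delta).

(* Main.v *)
Require Import Defs.
From Stdlib Require Import Reals Lra Psatz.
Open Scope R_scope.

Lemma core (k d x : R) : 1 < k -> 0 < d -> d < 1 -> 0 < x ->
  x*((1+d)*k+(1-d)) <= 2 -> (k+1)*(x*(1-d)) > 2 - d*(k+1) ->
  0 < (1 - x*(1-d))*(k-1+(k+1)*(d-(1 - x*(1-d))))/((k-(1-d))*d) /\
  (1 - x*(1-d))*(k-1+(k+1)*(d-(1 - x*(1-d))))/((k-(1-d))*d) < (1 - x*(1-d))^2.
Proof.
  intros Hk Hd0 Hd1 Hx Hu Hl.
  set (y := x*(1-d)) in *.
  assert (Hy0 : 0 < y) by (unfold y; nra).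
  assert (Hyu : y*((1+d)*k+(1-d)) <= 2*(1-d)).
  { unfold y. replace (x*(1-d)*((1+d)*k+(1-d))) with ((1-d)*(x*((1+d)*k+(1-d)))) by ring. nra. }
  assert (HA : 1 - d < (1+d)*k) by nra.
  assert (Hrho : 0 < 1 - y) by nra.
  assert (HN : 0 < k-1+(k+1)*(d-(1-y))) by nra.
  assert (HD : 0 < (k-(1-d))*d) by nra.
  split.
  - unfold Rdiv. apply Rmult_lt_0_compat; [nra | apply Rinv_0_lt_compat; lra].
  - apply Rmult_lt_reg_r with ((k-(1-d))*d); [lra|].
    unfold Rdiv. rewrite Rmult_assoc, Rinv_l by lra. rewrite Rmult_1_r.
    assert (Hkey : k-1+(k+1)*(d-(1-y)) < (1-y)*((k-(1-d))*d)).
    {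
      assert (y*((1+d)*k+(1-d)+d*d)*((1+d)*k+(1-d)) <= 2*(1-d)*((1+d)*k+(1-d)+d*d)) by nra.
      assert (2*(1-d)*((1+d)*k+(1-d)+d*d) < (2-2*d+d*d)*((1+d)*k+(1-d))) by nra.
      assert (y*((1+d)*k+(1-d)+d*d) < 2-2*d+d*d) by nra.
      nra. }
    nra.
Qed.

Theorem lemma3p3 (m L delta alpha : R) :
  0 < m -> m < L ->
  0 < delta -> delta < 1 ->
  Rmax (alpha_minus m L delta) 0 < alpha ->
  alpha <= 2 / ((1 + delta) * L + (1 - delta) * m) ->
  0 < gamma_star m L alpha delta /\
  gamma_star m L alpha delta < (rho_star m alpha delta) ^ 2.
Proof.
  intros Hm HL Hd0 Hd1 Hmax Hu.
  assert (Ha0 : 0 < alpha) by (eapply Rle_lt_trans; [apply Rmax_r|exact Hmax]).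
  assert (Ham : alpha_minus m L delta < alpha) by (eapply Rle_lt_trans; [apply Rmax_l|exact Hmax]).
  unfold gamma_star, rho_star.
  apply core; try lra.
  - apply Rmult_lt_reg_r with m; [lra|]. unfold Rdiv. rewrite Rmult_assoc, Rinv_l by lra. lra.
  - apply Rmult_lt_0_compat; lra.
  - assert (Hden : 0 < (1 + delta) * L + (1 - delta) * m) by nra.
    replace (alpha * m * ((1 + delta) * (L / m) + (1 - delta)))
      with (alpha * ((1 + delta) * L + (1 - delta) * m)) by (field; lra).
    apply Rmult_le_reg_r with (/((1 + delta) * L + (1 - delta) * m)).
    + apply Rinv_0_lt_compat; lra.
    + rewrite Rmult_assoc, Rinv_r by lra. lra.
  - unfold alpha_minus in Ham.
    set (t := 2 / (L + m) - delta / m) in *.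
    assert (Ht : t < alpha*(1-delta)).
    { apply Rmult_lt_reg_r with (/(1-delta)). apply Rinv_0_lt_compat; lra.
      rewrite Rmult_assoc, Rinv_r by lra. lra. }
    replace ((L / m + 1) * (alpha * m * (1 - delta))) with ((L+m)*(alpha*(1-delta))) by (field; lra).
    replace (2 - delta * (L / m + 1)) with ((L+m)*t) by (unfold t; field; lra).
    apply Rmult_lt_compat_l; lra.
Qed.
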